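(* Let $\pi_1,\pi_2,\pi_3,\pi_4$ be permutations of $[8]=\{1,\dots,8\}$. Call a permutation $\sigma$ of $[8]$ bad if there is no permutation $\tau$ of $[8]$ that is simultaneously a derangement of each of $\pi_1,\pi_2,\pi_3,\pi_4,\sigma$. Then there are at most $96$ bad permutations. Moreover, if there are more than $24$ bad permutations, then there exist a permutation $\sigma_0$ of $[8]$ and a set $I\subseteq[8]$ with $|I|=5$ such that every bad permutation $\tau$ satisfies $\tau(i)=\sigma_0(i)$ for at least four elements $i\in I$.
   Context: A permutation $\tau$ of $[k]$ is a derangement of a permutation $\pi$ of $[k]$ if $\tau(i)\neq\pi(i)$ for every $i\in[k]$. *)

(* Defs.v *)
From mathcomp Require Import all_boot all_order all_fingroup.
Set Implicit Arguments. Unset Strict Implicit. Unset Printing Implicit Defensive.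

Definition derangement_of (k : nat) (tau pi : 'S_k) : bool :=
  [forall i, tau i != pi i].

Definition bad (p1 p2 p3 p4 sigma : 'S_8) : bool :=
  ~~ [exists tau : 'S_8,
        [&& derangement_of tau p1, derangement_of tau p2, derangement_of tau p3,
            derangement_of tau p4 & derangement_of tau sigma]].

Definition bad_set (p1 p2 p3 p4 : 'S_8) : {set 'S_8} :=
  [set s | bad p1 p2 p3 p4 s].

(* Main.v *)
Require Import Defs.
From mathcomp Require Import all_boot all_order all_fingroup.
From mathcomp Require Import zify.
From Stdlib Require Import Classical.
Set Implicit Arguments. Unset Strict Implicit. Unset Printing Implicit Defensive.

Definition nbh (T : finType) (r : rel T) (S : {set T}) : {set T} :=
  [set y | [exists x in S, r x y]].

Definition hallc (T : finType) (r : rel T) (A : {set T}) :=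
  forall S : {set T}, S \subset A -> #|S| <= #|nbh r S|.

Lemma nbhU (T : finType) (r : rel T) (S1 S2 : {set T}) : nbh r (S1 :|: S2) = nbh r S1 :|: nbh r S2.
Proof.
apply/setP=> y; rewrite !inE; apply/existsP/orP.
- by case=> x /andP[]; rewrite inE => /orP[] h hr; [left|right]; apply/existsP; exists x; rewrite h.
- by case=> /existsP[x /andP[h hr]]; exists x; rewrite inE h ?orbT.
Qed.

Lemma nbh_sub (T : finType) (r r' : rel T) (S : {set T}) :
  (forall x y, x \in S -> r x y -> r' x y) -> nbh r S \subset nbh r' S.
Proof.
move=> h; apply/subsetP=> y; rewrite !inE => /existsP[x /andP[hx hr]].
by apply/existsP; exists x; rewrite hx (h _ _ hx hr).
Qed.

Lemma hall_gen (T : finType) n : forall (r : rel T) (A : {set T}), #|A| <= n -> hallc r A ->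
  exists f : T -> T, {in A &, injective f} /\ {in A, forall x, r x (f x)}.
Proof.
elim: n => [|n IH] r A hA hc.
  have A0 : A = set0 by apply/cards0_eq; lia.
  by exists id; split; move=> x; rewrite A0 inE.
case: (boolP [exists S : {set T}, [&& S \subset A, S != set0, S != A & #|nbh r S| <= #|S|]]).
- case/existsP=> S /and4P[sSA S0 SA hS].
  have ltS : #|S| < #|A| by apply: proper_card; rewrite properEneq SA.
  have [f1 [inj1 r1]] : exists f, {in S &, injective f} /\ {in S, forall x, r x (f x)}.
    apply: (IH r S); first lia.
    by move=> S' sS'; apply: hc; apply: subset_trans sSA.
  set r2 : rel T := fun x y => r x y && (y \notin nbh r S).
  have ltAS : #|A :\: S| <= n.
    have := cardsID S A; have : 0 < #|S| by rewrite card_gt0.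
    have -> : A :&: S = S by apply/setIidPr.
    lia.
  have [f2 [inj2 r2']] : exists f, {in A :\: S &, injective f} /\ {in A :\: S, forall x, r2 x (f x)}.
    apply: (IH r2 (A :\: S)) => // S' sS'.
    have h1 : #|S' :|: S| <= #|nbh r (S' :|: S)|.
      by apply: hc; rewrite subUset sSA andbT; apply: subset_trans sS' (subsetDl _ _).
    have dis : [disjoint S' & S].
      rewrite -setI_eq0; apply/eqP/setP=> x; rewrite !inE.
      case hx: (x \in S') => //=; have := subsetP sS' x hx; rewrite inE; case: (x \in S) => //.
    have cU : #|S' :|: S| = #|S'| + #|S|.
      by have := cardsUI S' S; move: dis; rewrite -setI_eq0 => /eqP ->; rewrite cards0; lia.
    rewrite nbhU in h1.
    have sub : nbh r S' :\: nbh r S \subset nbh r2 S'.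
      apply/subsetP=> y; rewrite !inE => /andP[hyS /existsP[x /andP[hx hr]]].
      by apply/existsP; exists x; rewrite hx /r2 hr inE hyS.
    have := subset_leq_card sub; rewrite cardsD.
    have := cardsU (nbh r S') (nbh r S). lia.
  exists (fun x => if x \in S then f1 x else f2 x); split.
  + move=> x y hx hy; case hxS: (x \in S); case hyS: (y \in S).
    * exact: inj1.
    * move=> e; have := r2' y ltac:(by rewrite inE hyS hy); rewrite /r2 -e => /andP[_].
      by rewrite inE; case/existsP; exists x; rewrite hxS (r1 x hxS).
    * move=> e; have := r2' x ltac:(by rewrite inE hxS hx); rewrite /r2 e => /andP[_].
      by rewrite inE; case/existsP; exists y; rewrite hyS (r1 y hyS).
    * by apply: inj2; rewrite inE ?hxS ?hyS.
  + move=> x hx; case hxS: (x \in S); first exact: r1.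
    by have /andP[] := r2' x ltac:(by rewrite inE hxS hx).
- rewrite negb_exists => /forallP hstrict.
  case: (set_0Vmem A) => [A0|[a ha]].
    by exists id; split; move=> x; rewrite A0 inE.
  have : 0 < #|nbh r [set a]|.
    have := hc [set a]; rewrite sub1set cards1 => h; exact: h ha.
  rewrite card_gt0 => /set0Pn[b]; rewrite inE => /existsP[a' /andP[]]; rewrite inE => /eqP -> hab.
  set r' : rel T := fun x y => r x y && (y != b).
  have [f' [inj' rf']] : exists f, {in A :\ a &, injective f} /\ {in A :\ a, forall x, r' x (f x)}.
    apply: (IH r' (A :\ a)).
      by have := cardsD1 a A; rewrite ha; lia.
    move=> S' sS'.
    case: (set_0Vmem S') => [-> |[x0 hx0]]; first by rewrite cards0.
    have := hstrict S'.
    have sA : S' \subset A by apply: subset_trans sS' (subsetDl _ _).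
    have nA : S' != A.
      apply/eqP=> e; have := subsetP sS' a; rewrite e ha !inE eqxx => /(_ isT).
      done.
    have n0 : S' != set0 by apply/set0Pn; exists x0.
    rewrite sA n0 nA /= -ltnNge => hlt.
    have sub : nbh r S' :\ b \subset nbh r' S'.
      apply/subsetP=> y; rewrite !inE => /andP[hyb /existsP[x /andP[hx hr]]].
      by apply/existsP; exists x; rewrite hx /r' hr hyb.
    have := subset_leq_card sub; have := cardsD1 b (nbh r S'); lia.
  exists (fun x => if x == a then b else f' x); split.
  + move=> x y hx hy; case: (eqVneq x a) => [->|hxa]; case: (eqVneq y a) => [->|hya] //.
    * move=> e; have := rf' y ltac:(by rewrite !inE hya hy); rewrite /r' -e eqxx andbF //.
    * move=> e; have := rf' x ltac:(by rewrite !inE hxa hx); rewrite /r' e eqxx andbF //.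
    * by apply: inj'; rewrite !inE ?hxa ?hya.
  + move=> x hx; case: (eqVneq x a) => [->|hxa] //.
    by have /andP[] := rf' x ltac:(by rewrite !inE hxa hx).
Qed.

Definition rdeg (E : rel 'I_8) := forall x, #|[set y | E x y]| <= 4.
Definition cdeg (E : rel 'I_8) := forall y, #|[set x | E x y]| <= 4.
Definition trE (E : rel 'I_8) : rel 'I_8 := fun x y => E y x.
Definition cover (E : rel 'I_8) (s : 'S_8) (S U : {set 'I_8}) :=
  forall x y, x \in S -> y \in U -> E x y || (s x == y).

Ltac gcard := repeat match goal with
 | |- context [ @card _ ?A ] => let t := fresh "t" in set t := (@card _ A); clearbody t
 end.
Ltac clear_all := repeat match goal with H : _ |- _ => clear H end.
Ltac glia := gcard; clear_all; intros; lia.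
Ltac gnia := gcard; clear_all; intros; nia.


Lemma rdeg_tr E : cdeg E -> rdeg (trE E). Proof. by []. Qed.
Lemma cdeg_tr E : rdeg E -> cdeg (trE E). Proof. by []. Qed.

Lemma cover_tr E s S U : cover E s S U -> cover (trE E) s^-1 U S.
Proof.
move=> h y x hy hx; rewrite /trE; case/orP: (h x y hx hy) => [->//|/eqP <-].
by rewrite permK eqxx orbT.
Qed.

Lemma card8 (A : {set 'I_8}) : #|A| <= 8.
Proof. by have := max_card A; rewrite card_ord. Qed.

Lemma cardC8 (A : {set 'I_8}) : #|A| + #|~: A| = 8.
Proof. by rewrite cardsC card_ord. Qed.

Lemma sub_card_eq (T : finType) (A B : {set T}) : A \subset B -> #|B| <= #|A| -> A = B.
Proof. by move=> s c; apply/eqP; rewrite eqEcard s c. Qed.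

Lemma row_fact E s S U x : rdeg E -> cover E s S U -> x \in S ->
  #|U| <= 5 /\ (#|U| = 5 -> s x \in U /\ forall y, E x y -> (y \in U) && (y != s x)).
Proof.
move=> hr hc hx.
have sub : U :\ s x \subset [set y | E x y].
  apply/subsetP=> y; rewrite !inE => /andP[hy hyU].
  by case/orP: (hc x y hx hyU) => // /eqP e; move: hy; rewrite e eqxx.
have c1 := subset_leq_card sub; have c2 : #|[set y | E x y]| <= 4 := hr x; have c3 : #|U| = (s x \in U) + #|U :\ s x| := cardsD1 (s x) U.
have c4 := leq_b1 (s x \in U).
have c5 := leq_trans c1 c2.
split; first lia.
move=> hU; have hsx : s x \in U by move: c3; case: (s x \in U) => //= c3; move: c5; rewrite -(add0n #|U :\ s x|) -c3 hU.
split=> // y hy.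
have e : U :\ s x = [set y | E x y].
  apply: sub_card_eq sub _; apply: leq_trans c2 _; move: c3; rewrite hsx hU /=.
  clear; lia.
have : y \in [set y | E x y] by rewrite inE.
by rewrite -e !inE andbC.
Qed.

Lemma tight_sizes E s S U : rdeg E -> cdeg E -> cover E s S U -> #|S| + #|U| = 9 ->
  (#|S| = 4 /\ #|U| = 5) \/ (#|S| = 5 /\ #|U| = 4).
Proof.
move=> hr hcd hc h9.
have cS := card8 S; have cU := card8 U.
case: (set_0Vmem S) => [S0|[x hx]].
  by move: h9; rewrite S0 cards0; clear -cU; lia.
case: (set_0Vmem U) => [U0|[y hy]].
  by move: h9; rewrite U0 cards0; clear -cS; lia.
have [h1 _] := row_fact hr hc hx.
have [h2 _] := row_fact (rdeg_tr hcd) (cover_tr hc) hy.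
clear -h1 h2 h9; lia.
Qed.

Lemma card_sep (C : {set 'I_8}) (P : pred 'I_8) : #|[set y in C | P y]| = \sum_(y in C) P y.
Proof.
rewrite -sum1_card big_mkcond /= [RHS]big_mkcond /=; apply: eq_bigr => y _.
by rewrite !inE; case: (y \in C); case: (P y).
Qed.

Lemma dcount (A B : {set 'I_8}) (F : rel 'I_8) :
  \sum_(x in A) #|[set y in B | F x y]| = \sum_(y in B) #|[set x in A | F x y]|.
Proof.
rewrite (eq_bigr (fun x => \sum_(y in B) F x y)); last by move=> x _; rewrite card_sep.
rewrite exchange_big /=; apply: eq_bigr => y _; by rewrite card_sep.
Qed.

Lemma rowlb E s S U (A B : {set 'I_8}) : cover E s S U -> A \subset S -> B \subset U ->
  #|A| * (#|B| - 1) <= \sum_(x in A) #|[set y in B | E x y]|.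
Proof.
move=> hc sA sB; rewrite -sum_nat_const; apply: leq_sum => x hx.
have sub : B :\ s x \subset [set y in B | E x y].
  apply/subsetP=> y; rewrite !inE => /andP[hy hyB]; rewrite hyB /=.
  case/orP: (hc x y (subsetP sA x hx) (subsetP sB y hyB)) => // /eqP e.
  by move: hy; rewrite e eqxx.
have c1 := subset_leq_card sub.
have c2 : #|B| = (s x \in B) + #|B :\ s x| := cardsD1 (s x) B.
have c3 := leq_b1 (s x \in B).
clear -c1 c2 c3; lia.
Qed.

Lemma collb E s S U (A B : {set 'I_8}) : cover E s S U -> A \subset S -> B \subset U ->
  #|B| * (#|A| - 1) <= \sum_(y in B) #|[set x in A | E x y]|.
Proof. by move=> hc sA sB; apply: (rowlb (cover_tr hc)). Qed.

Lemma two_eq (D : {set 'I_8}) a b : a \in D -> b \in D -> #|D| <= 1 -> a = b.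
Proof.
move=> ha hb hD; apply/eqP; apply: contraLR hD => hab.
have : [set a; b] \subset D by rewrite subUset !sub1set ha hb.
by move/subset_leq_card; rewrite cards2 hab -ltnNge.
Qed.

Definition Str (E : rel 'I_8) (I : {set 'I_8}) (s0 : 'S_8) (z c : 'I_8) :=
  #|I| = 5 /\ forall x y, x \in I -> y \in s0 @: I -> y != s0 x -> E x y || ((x == z) && (y == c)).

Lemma sub_size (T : finType) d : forall (S : {set T}) k, #|S| = k + d -> exists S' : {set T}, S' \subset S /\ #|S'| = k.
Proof.
elim: d => [|d IH] S k h; first by exists S; rewrite subxx addn0 in h *.
have : 0 < #|S| by rewrite h addnS.
rewrite card_gt0 => /set0Pn[x hx].
have := cardsD1 x S; rewrite hx h => e.
have [S' [s1 c1]] : exists S' : {set T}, S' \subset S :\ x /\ #|S'| = k.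
  by apply: IH; move: e; rewrite addnS add1n => -[].
by exists S'; split=> //; apply: subset_trans s1 (subsetDl _ _).
Qed.

Lemma pair_lemma E s1 S1 U1 s2 S2 U2 : rdeg E -> cdeg E ->
  cover E s1 S1 U1 -> #|S1| = 4 -> #|U1| = 5 ->
  cover E s2 S2 U2 -> #|S2| + #|U2| = 9 ->
  (forall x, x \in S1 -> s2 x = s1 x) \/ exists I s0 z c, Str E I s0 z c.
Proof.
move=> hr hcd hc1 hS1 hU1 hc2 h92.
have hsz2 := tight_sizes hr hcd hc2 h92.
have rs1 : forall x, x \in S1 -> s1 x \in U1 /\ forall y, E x y -> (y \in U1) && (y != s1 x).
  by move=> x hx; have [_ /(_ hU1)] := row_fact hr hc1 hx.
have colbd : forall y (A : {set 'I_8}), y \in U1 -> A \subset ~: S1 -> #|[set x in A | E x y]| <= 1.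
  move=> y A hy sA.
  have sub : [set x in A | E x y] :|: (S1 :\ (s1^-1)%g y) \subset [set x | E x y].
    apply/subsetP=> x; rewrite !inE => /orP[/andP[]//|/andP[hx hxS]].
    case/orP: (hc1 x y hxS hy) => // /eqP e; move: hx; rewrite -e permK eqxx //.
  have dis : [set x in A | E x y] :&: (S1 :\ (s1^-1)%g y) = set0.
    apply/setP=> x; rewrite !inE; case hxA: (x \in A) => //=.
    by have := subsetP sA x hxA; rewrite inE => /negbTE ->; rewrite !andbF.
  have c1 := subset_leq_card sub.
  have c2 : #|[set x | E x y]| <= 4 := hcd y.
  have c3 : #|[set x in A | E x y] :|: (S1 :\ (s1^-1)%g y)| + #|[set x in A | E x y] :&: (S1 :\ (s1^-1)%g y)| = #|[set x in A | E x y]| + #|S1 :\ (s1^-1)%g y| := cardsUI _ _.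
  rewrite dis cards0 in c3.
  have c4 : #|S1| = ((s1^-1)%g y \in S1) + #|S1 :\ (s1^-1)%g y| := cardsD1 _ _.
  have c5 := leq_b1 ((s1^-1)%g y \in S1).
  move: c1 c2 c3 c4 c5; rewrite hS1; glia.
set A1 := S2 :&: S1; set B1 := U2 :\: U1; set A2 := S2 :\: S1; set B2 := U2 :&: U1.
have eS2 : #|A1| + #|A2| = #|S2| := cardsID S1 S2.
have eU2 : #|B2| + #|B1| = #|U2| := cardsID U1 U2.
have cA2 : #|A2| <= 4.
  have : A2 \subset ~: S1 by apply/subsetP=> x; rewrite !inE => /andP[].
  move/subset_leq_card; have := cardC8 S1; clear -hS1; lia.
have cB1 : #|B1| <= 3.
  have : B1 \subset ~: U1 by apply/subsetP=> x; rewrite !inE => /andP[].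
  move/subset_leq_card; have := cardC8 U1; clear -hU1; lia.
have cA1 : #|A1| <= #|S1| := subset_leq_card (subsetIr _ _).
have cB2 : #|B2| <= #|U1| := subset_leq_card (subsetIr _ _).
have sA1 : A1 \subset S2 := subsetIl _ _.
have sA2 : A2 \subset S2 := subsetDl _ _.
have sB1 : B1 \subset U2 := subsetDl _ _.
have sB2 : B2 \subset U2 := subsetIl _ _.
have r1 : \sum_(x in A1) #|[set y in B1 | E x y]| = 0.
  apply/eqP; rewrite sum_nat_eq0; apply/forallP=> x; apply/implyP=> hx.
  rewrite cards_eq0; apply/eqP/setP=> y; rewrite !inE.
  have hxS1 : x \in S1 by move: hx; rewrite inE => /andP[].
  case hExy: (E x y); last by rewrite andbF.
  by have /andP[h _] := (rs1 x hxS1).2 y hExy; rewrite h.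
have l1 := rowlb hc2 sA1 sB1.
have l2 : #|B1| * (#|A1| - 1) <= 0 by apply: leq_trans (collb hc2 sA1 sB1) _; rewrite -dcount r1.
rewrite r1 in l1.
have r2 : \sum_(y in B2) #|[set x in A2 | E x y]| <= #|B2|.
  rewrite -[X in _ <= X]sum1_card; apply: leq_sum => y hy.
  apply: colbd; first by move: hy; rewrite inE => /andP[].
  by apply/subsetP=> x; rewrite !inE => /andP[].
have l3 : #|A2| * (#|B2| - 1) <= \sum_(y in B2) #|[set x in A2 | E x y]|.
  by rewrite -dcount; apply: rowlb hc2 sA2 sB2.
have l4 := collb hc2 sA2 sB2.
have [hA2 hB1] : #|A2| <= 1 /\ #|B1| = 0.
  move: (leq_trans l3 r2) (leq_trans l4 r2) l1 l2 eS2 eU2 cA2 cB1 cA1 cB2 hsz2 hS1 hU1.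
  clear -r2; gnia.
have U2U1 : U2 \subset U1.
  apply/subsetP=> y hy; apply/negPn/negP=> hy1.
  have hyB : y \in B1 by rewrite !inE hy1 hy.
  have : 0 < #|B1| by apply/card_gt0P; exists y.
  by rewrite hB1.
have rs2 : #|U2| = 5 -> forall x, x \in S2 -> s2 x \in U2 /\ forall y, E x y -> (y \in U2) && (y != s2 x).
  by move=> hU2 x hx; have [_ /(_ hU2)] := row_fact hr hc2 hx.
case: (posnP #|A2|) => [A20|A2p].
  have S2S1 : S2 \subset S1.
    apply/subsetP=> x hx; apply/negPn/negP=> hx1.
    have hxA : x \in A2 by rewrite !inE hx1 hx.
    have : 0 < #|A2| by apply/card_gt0P; exists x.
    by rewrite A20.
  have hsz : #|S2| = 4 /\ #|U2| = 5.
    have := subset_leq_card S2S1; move: hsz2 hS1; glia.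
  have eU : U2 = U1 by apply: sub_card_eq U2U1 _; rewrite hU1 hsz.2.
  have eS : S2 = S1 by apply: sub_card_eq S2S1 _; rewrite hS1 hsz.1.
  left=> x hx; rewrite -eS in hx.
  have [h1 h2] := rs2 hsz.2 x hx.
  have := hc1 x (s2 x) ltac:(by rewrite -eS) ltac:(by rewrite -eU).
  case/orP=> [hE|/eqP //].
  by have /andP[_] := h2 _ hE; rewrite eqxx.
have [z A2z] : exists z, A2 = [set z].
  by apply/cards1P; move: hA2 A2p; glia.
have hz : z \in A2 by rewrite A2z set11.
have zS2 : z \in S2 by move: hz; rewrite inE => /andP[].
have zS1 : z \notin S1 by move: hz; rewrite inE => /andP[].
have [v hv] : exists v, v \in U1 :\: s1 @: S1.
  apply/set0Pn; rewrite -card_gt0.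
  have ci : #|s1 @: S1| = #|S1| := card_imset _ (@perm_inj _ s1).
  have cd : #|U1 :\: s1 @: S1| = #|U1| - #|U1 :&: s1 @: S1| := cardsD _ _.
  have := subset_leq_card (subsetIr U1 (s1 @: S1)).
  move: ci cd hS1 hU1; glia.
have vU1 : v \in U1 by move: hv; rewrite inE => /andP[].
have vnS : v \notin s1 @: S1 by move: hv; rewrite inE => /andP[].
have colv : forall x, E x v -> x \in S1.
  have sub : S1 \subset [set x | E x v].
    apply/subsetP=> x hx; rewrite inE.
    case/orP: (hc1 x v hx vU1) => // /eqP e.
    by move: vnS; rewrite -e imset_f.
  have e := sub_card_eq sub ltac:(by rewrite hS1; apply: hcd).
  by move=> x hx; rewrite e inE.
pose s0 := (s1 * tperm (s1 z) v)%g.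
have s0S : forall x, x \in S1 -> s0 x = s1 x.
  move=> x hx; rewrite /s0 permM tpermD //.
    by rewrite (inj_eq (@perm_inj _ s1)); apply: contraNneq zS1 => ->.
  by apply: contraNneq vnS => ->; rewrite imset_f.
have s0z : s0 z = v by rewrite /s0 permM tpermL.
have imI : forall y, y \in s0 @: (z |: S1) -> y \in U1.
  move=> y /imsetP[x hx ->]; move: hx; rewrite !inE => /orP[/eqP ->|hx]; first by rewrite s0z.
  by rewrite s0S // (rs1 x hx).1.
have cI : #|z |: S1| = 5 by rewrite cardsU1 zS1 hS1.
have zc : forall y, y \in U2 -> E z y || (s2 z == y) := hc2 z ^~ zS2.
have strS1 : forall x y, x \in S1 -> y \in U1 -> y != s0 x -> E x y.
  move=> x y hx hy; rewrite s0S // => hne.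
  by case/orP: (hc1 x y hx hy) => // /eqP e; move: hne; rewrite e eqxx.
right; exists (z |: S1), s0, z.
case: (boolP (U1 \subset U2)) => [U12|nU12].
  exists (s2 z); split=> // x y; rewrite !inE => /orP[/eqP ->|hx] hy hne.
    by rewrite eqxx /=; case/orP: (zc y (subsetP U12 y (imI y hy))) => [->//|/eqP ->]; rewrite eqxx orbT.
  by rewrite strS1 // imI.
have [w hw] : exists w, w \in U1 :\: U2.
  apply/set0Pn; apply: contra nU12; rewrite setD_eq0 //.
have cw : #|U1 :\: U2| <= 1.
  have cd : #|U1 :\: U2| = #|U1| - #|U2| := cardsDS U2U1.
  move: cd hsz2 hU1; glia.
case: (eqVneq w v) => [wv|wv].
  exists (s2 z); split=> // x y; rewrite !inE => /orP[/eqP ->|hx] hy hne.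
    have yU1 := imI y hy.
    have yU2 : y \in U2.
      apply/negPn/negP=> hy2; have yD : y \in U1 :\: U2 by rewrite inE hy2 yU1.
      by move: hne; rewrite s0z (two_eq yD hw cw) wv eqxx.
    by rewrite eqxx /=; case/orP: (zc y yU2) => [->//|/eqP ->]; rewrite eqxx orbT.
  by rewrite strS1 // imI.
have vU2 : v \in U2.
  apply/negPn/negP=> hv2; have vD : v \in U1 :\: U2 by rewrite inE hv2 vU1.
  by move: wv; rewrite (two_eq vD hw cw) eqxx.
have s2z : s2 z = v.
  case/orP: (zc v vU2) => [hE|/eqP //].
  by move: zS1; rewrite (colv z hE).
exists w; split=> // x y; rewrite !inE => /orP[/eqP ->|hx] hy hne.
  have yU1 := imI y hy.
  rewrite eqxx /=; case: (boolP (y \in U2)) => hy2.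
    by case/orP: (zc y hy2) => [->//|/eqP e]; move: hne; rewrite s0z -s2z e eqxx.
  have yD : y \in U1 :\: U2 by rewrite inE hy2 yU1.
  by rewrite (two_eq yD hw cw) eqxx orbT.
by rewrite strS1 // imI.
Qed.

Lemma imsetK8 (s0 : 'S_8) (I : {set 'I_8}) : (s0^-1)%g @: (s0 @: I) = I.
Proof.
apply/setP=> x; apply/imsetP/idP.
  by case=> y /imsetP[x' hx' ->] ->; rewrite permK.
by move=> hx; exists (s0 x); [rewrite imset_f | rewrite permK].
Qed.

Lemma card_im8 (s0 : 'S_8) (I : {set 'I_8}) : #|s0 @: I| = #|I|.
Proof. exact: card_imset _ (@perm_inj _ s0). Qed.

Lemma str_tr E I s0 z c : Str E I s0 z c -> Str (trE E) (s0 @: I) (s0^-1)%g c z.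
Proof.
case=> hI h; split; first by rewrite card_im8.
move=> y x hy; rewrite imsetK8 => hx hne.
have hne' : y != s0 x by apply: contra hne => /eqP ->; rewrite permK.
by rewrite /trE andbC; apply: h.
Qed.

Lemma str_m E I s0 z c : rdeg E -> cdeg E -> Str E I s0 z c -> forall x, x \in I -> ~~ E x (s0 x).
Proof.
move=> hr hcd [hI h] x hx; apply/negP=> hE.
case: (eqVneq x z) => [xz|xz].
  have sub : I \subset [set x' | E x' (s0 x)].
    apply/subsetP=> x' hx'; rewrite inE; case: (eqVneq x' x) => [->//|ne].
    have := h x' (s0 x) hx' (imset_f _ hx) ltac:(by rewrite (inj_eq (@perm_inj _ s0)) eq_sym).
    by rewrite -xz (negbTE ne) /= orbF.
  have := subset_leq_card sub; have : #|[set x' | E x' (s0 x)]| <= 4 := hcd _.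
  by move: hI; glia.
have sub : s0 @: I \subset [set y | E x y].
  apply/subsetP=> y hy; rewrite inE; case: (eqVneq y (s0 x)) => [->//|ne].
  by have := h x y hx hy ne; rewrite (negbTE xz) /= orbF.
have := subset_leq_card sub; have : #|[set y | E x y]| <= 4 := hr _.
have := card_im8 s0 I; move: hI; glia.
Qed.

Lemma str_rowsat E I s0 z c : rdeg E -> Str E I s0 z c ->
  forall x, x \in I -> x != z -> forall y, E x y -> y \in s0 @: I.
Proof.
move=> hr [hI h] x hx xz.
have sub : (s0 @: I) :\ s0 x \subset [set y | E x y].
  apply/subsetP=> y; rewrite !inE => /andP[ne hy].
  by have := h x y hx hy ne; rewrite (negbTE xz) /= orbF.
have c1 : #|s0 @: I| = (s0 x \in s0 @: I) + #|(s0 @: I) :\ s0 x| := cardsD1 _ _.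
rewrite imset_f // card_im8 in c1.
have e : (s0 @: I) :\ s0 x = [set y | E x y].
  apply: sub_card_eq sub _; have : #|[set y | E x y]| <= 4 := hr _.
  by move: c1 hI; glia.
move=> y hy; have : y \in [set y | E x y] by rewrite inE.
by rewrite -e !inE => /andP[].
Qed.

Lemma str_rowz E I s0 z c : rdeg E -> Str E I s0 z c -> z \in I ->
  forall B : {set 'I_8}, B \subset ~: (s0 @: I) -> #|[set y in B | E z y]| <= 1.
Proof.
move=> hr [hI h] hz B sB.
have sub : [set y in B | E z y] :|: ((s0 @: I) :\ s0 z) :\ c \subset [set y | E z y].
  apply/subsetP=> y; rewrite !inE => /orP[/andP[]//|/and3P[nc ne hy]].
  by have := h z y hz hy ne; rewrite eqxx (negbTE nc) /= orbF.
have dis : [set y in B | E z y] :&: (((s0 @: I) :\ s0 z) :\ c) = set0.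
  apply/setP=> y; rewrite !inE; case hyB: (y \in B) => //=.
  by have := subsetP sB y hyB; rewrite inE => /negbTE ->; rewrite !andbF.
have c1 := subset_leq_card sub.
have c2 : #|[set y | E z y]| <= 4 := hr z.
have c3 : #|[set y in B | E z y] :|: ((s0 @: I) :\ s0 z) :\ c| + #|[set y in B | E z y] :&: (((s0 @: I) :\ s0 z) :\ c)| = #|[set y in B | E z y]| + #|((s0 @: I) :\ s0 z) :\ c| := cardsUI _ _.
rewrite dis cards0 in c3.
have c4 : #|s0 @: I| = (s0 z \in s0 @: I) + #|(s0 @: I) :\ s0 z| := cardsD1 _ _.
rewrite imset_f // card_im8 hI in c4.
have c5 : #|(s0 @: I) :\ s0 z| = (c \in (s0 @: I) :\ s0 z) + #|((s0 @: I) :\ s0 z) :\ c| := cardsD1 _ _.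
have c6 := leq_b1 (c \in (s0 @: I) :\ s0 z).
move: c1 c2 c3 c4 c5 c6; glia.
Qed.

Lemma absorb E I s0 z c s S U : rdeg E -> cdeg E -> Str E I s0 z c ->
  cover E s S U -> #|S| + #|U| = 9 -> 4 <= #|[set i in I | s i == s0 i]|.
Proof.
move=> hr hcd hst hc h9.
have hI : #|I| = 5 by case: hst.
have hsz := tight_sizes hr hcd hc h9.
set K := s0 @: I.
have cK : #|K| = 5 by rewrite card_im8.
have hm := str_m hr hcd hst.
have rsat := str_rowsat hr hst.
have hst' := str_tr hst.
have csat : forall y, y \in K -> y != c -> forall x, E x y -> x \in I.
  by move=> y hy hyc x hE; have := str_rowsat (rdeg_tr hcd) hst' hy hyc hE; rewrite imsetK8.
have cc : c \in K -> forall A : {set 'I_8}, A \subset ~: I -> #|[set x in A | E x c]| <= 1.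
  move=> hcK A sA; apply: (str_rowz (rdeg_tr hcd) hst' hcK); by rewrite imsetK8.
set A1 := S :\: I; set B1 := U :&: K; set A2 := S :&: I; set B2 := U :\: K.
have sA1 : A1 \subset S := subsetDl _ _.
have sB1 : B1 \subset U := subsetIl _ _.
have sA2 : A2 \subset S := subsetIl _ _.
have sB2 : B2 \subset U := subsetDl _ _.
have hA1I : forall x, x \in A1 -> x \notin I by move=> x; rewrite inE => /andP[].
have hB2K : forall y, y \in B2 -> y \notin K by move=> y; rewrite inE => /andP[].
have colsum : \sum_(y in B1) #|[set x in A1 | E x y]| <= 1.
  apply: (@leq_trans (\sum_(y in B1) (y == c))).
    apply: leq_sum => y hy.
    have hyK : y \in K by move: hy; rewrite inE => /andP[].
    case: (eqVneq y c) => [ey|ne].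
      rewrite ey in hyK *; apply: (cc hyK A1).
      by apply/subsetP=> x hx; rewrite inE; apply: hA1I.
    rewrite leqn0 cards_eq0; apply/eqP/setP=> x; rewrite !inE.
    apply/negbTE/negP=> /andP[/andP[hxn _] hE].
    by move: hxn; rewrite (csat y hyK ne x hE).
  rewrite -card_sep; apply: leq_trans (subset_leq_card (_ : _ \subset [set c])) _; last by rewrite cards1.
  by apply/subsetP=> y; rewrite !inE => /andP[_].
have rowsum : \sum_(x in A2) #|[set y in B2 | E x y]| <= 1.
  apply: (@leq_trans (\sum_(x in A2) (x == z))).
    apply: leq_sum => x hx.
    have hxI : x \in I by move: hx; rewrite inE => /andP[].
    case: (eqVneq x z) => [ex|ne].
      rewrite ex in hxI *; apply: (str_rowz hr hst hxI).
      by apply/subsetP=> y hy; rewrite inE; apply: hB2K.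
    rewrite leqn0 cards_eq0; apply/eqP/setP=> y; rewrite !inE.
    apply/negbTE/negP=> /andP[/andP[hyn _] hE].
    by move: hyn; rewrite (rsat x hxI ne y hE).
  rewrite -card_sep; apply: leq_trans (subset_leq_card (_ : _ \subset [set z])) _; last by rewrite cards1.
  by apply/subsetP=> y; rewrite !inE => /andP[_].
have l1 : #|A1| * (#|B1| - 1) <= 1 by apply: leq_trans (rowlb hc sA1 sB1) _; rewrite dcount.
have l2 : #|B1| * (#|A1| - 1) <= 1 := leq_trans (collb hc sA1 sB1) colsum.
have l3 : #|A2| * (#|B2| - 1) <= 1 := leq_trans (rowlb hc sA2 sB2) rowsum.
have l4 : #|B2| * (#|A2| - 1) <= 1 by apply: leq_trans (collb hc sA2 sB2) _; rewrite -dcount.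
have eS : #|A2| + #|A1| = #|S| := cardsID I S.
have eU : #|B1| + #|B2| = #|U| := cardsID K U.
have cA1 : #|A1| <= 3.
  have : A1 \subset ~: I by apply/subsetP=> x hx; rewrite inE; apply: hA1I.
  move/subset_leq_card; have := cardC8 I; move: hI; glia.
have cB2 : #|B2| <= 3.
  have : B2 \subset ~: K by apply/subsetP=> x hx; rewrite inE; apply: hB2K.
  move/subset_leq_card; have := cardC8 K; move: cK; glia.
have [hA10 hB20] : #|A1| = 0 /\ #|B2| = 0.
  move: l1 l2 l3 l4 eS eU cA1 cB2 hsz; gnia.
have SI : S \subset I.
  apply/subsetP=> x hx; apply/negPn/negP=> hx1.
  have hxA : x \in A1 by rewrite !inE hx1 hx.
  have : 0 < #|A1| by apply/card_gt0P; exists x.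
  by rewrite hA10.
have UK : U \subset K.
  apply/subsetP=> y hy; apply/negPn/negP=> hy1.
  have hyB : y \in B2 by rewrite !inE hy1 hy.
  have : 0 < #|B2| by apply/card_gt0P; exists y.
  by rewrite hB20.
case: hsz => [[hS4 hU5]|[hS5 hU4]].
  have eUK : U = K by apply: sub_card_eq UK _; rewrite cK hU5.
  have sub : S \subset [set i in I | s i == s0 i].
    apply/subsetP=> x hx; have hxI := subsetP SI x hx; rewrite inE hxI /=.
    have := hc x (s0 x) hx ltac:(by rewrite eUK imset_f).
    by rewrite (negbTE (hm x hxI)).
  by have := subset_leq_card sub; rewrite hS4.
have eSI : S = I by apply: sub_card_eq SI _; rewrite hI hS5.
set X := [set i in I | s0 i \in U].
have sub : X \subset [set i in I | s i == s0 i].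
  apply/subsetP=> x; rewrite !inE => /andP[hxI hxU]; rewrite hxI /=.
  have := hc x (s0 x) ltac:(by rewrite eSI) hxU.
  by rewrite (negbTE (hm x hxI)).
have sub2 : U \subset s0 @: X.
  apply/subsetP=> y hy; have := subsetP UK y hy; case/imsetP=> x hx ey.
  by rewrite ey imset_f // inE hx -ey hy.
have := subset_leq_card sub; have := subset_leq_card sub2; rewrite card_im8.
move: hU4; glia.
Qed.

Definition agree (s0 : 'S_8) (J : {set 'I_8}) : {set 'S_8} :=
  [set s : 'S_8 | [forall x in J, s x == s0 x]].

Lemma card_agree s0 J : #|agree s0 J| = #|~: J|`!.
Proof.
rewrite -card_perm.
have -> : agree s0 J = [set (r * s0)%g | r in perm_on (~: J)].
  apply/setP=> s; rewrite inE; apply/forallP/imsetP.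
  - move=> h; exists (s * s0^-1)%g; last by rewrite mulgKV.
    apply/subsetP=> x; rewrite !inE permM; apply: contra => hx.
    by have := h x; rewrite hx /= => /eqP ->; rewrite permK.
  - case=> r hr -> x; apply/implyP=> hx; rewrite permM.
    by rewrite (out_perm hr) // inE hx.
by rewrite card_imset //; apply: mulIg.
Qed.

Lemma card_bigcup_le (I : finType) (P : pred I) (F : I -> {set 'S_8}) :
  #|\bigcup_(i | P i) F i| <= \sum_(i | P i) #|F i|.
Proof.
elim/big_rec2: _ => [|i n A _ h]; first by rewrite cards0.
apply: leq_trans (leq_card_setU _ _) _; by rewrite leq_add2l.
Qed.

Lemma card_agree4 (s0 : 'S_8) (I : {set 'I_8}) : #|I| = 5 ->
  #|[set s : 'S_8 | 4 <= #|[set i in I | s i == s0 i]|]| <= 96.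
Proof.
move=> hI.
have sub : [set s : 'S_8 | 4 <= #|[set i in I | s i == s0 i]|] \subset
    agree s0 I :|: \bigcup_(i in I) (agree s0 (I :\ i) :\: agree s0 I).
  apply/subsetP=> s; rewrite inE => h4; rewrite inE.
  case: (boolP (s \in agree s0 I)) => //= hn.
  have [i hi hsi] : exists2 i, i \in I & s i != s0 i.
    move: hn; rewrite inE negb_forall => /existsP[i]; rewrite negb_imply => /andP[hi hsi].
    by exists i.
  apply/bigcupP; exists i => //; rewrite inE hn /= inE.
  have sub1 : [set i in I | s i == s0 i] \subset I :\ i.
    apply/subsetP=> x; rewrite !inE => /andP[hx e]; rewrite hx andbT.
    by apply: contraNneq hsi => <-.
  have c1 : #|I| = (i \in I) + #|I :\ i| := cardsD1 _ _.
  rewrite hi hI in c1.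
  have e := sub_card_eq sub1 ltac:(by move: c1 h4; glia).
  apply/forallP=> x; apply/implyP=> hx; move: hx; rewrite -e inE => /andP[].
  by [].
apply: leq_trans (subset_leq_card sub) _.
apply: leq_trans (leq_card_setU _ _) _.
apply: leq_trans (leq_add (leqnn _) (card_bigcup_le _ _)) _.
have cI : #|agree s0 I| = 6.
  rewrite card_agree; have := cardC8 I; rewrite hI => h.
  by have -> : #|~: I| = 3 by lia.
have cD : forall i, i \in I -> #|agree s0 (I :\ i) :\: agree s0 I| = 18.
  move=> i hi; rewrite cardsDS.
    rewrite card_agree cI.
    have c1 : #|I| = (i \in I) + #|I :\ i| := cardsD1 _ _.
    have := cardC8 (I :\ i); rewrite hi hI in c1 => h.
    by have -> : #|~: (I :\ i)| = 4 by lia.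
  apply/subsetP=> s; rewrite !inE => /forallP h; apply/forallP=> x; apply/implyP.
  by rewrite inE => /andP[_ hx]; apply: (implyP (h x)).
rewrite cI (eq_bigr (fun _ => 18)); last by move=> i hi; apply: cD.
by rewrite sum_nat_const hI.
Qed.

Definition Erel (p1 p2 p3 p4 : 'S_8) : rel 'I_8 :=
  fun x y => (y == p1 x) || (y == p2 x) || (y == p3 x) || (y == p4 x).

Lemma card4 (T : finType) (a b c d : T) : #|[set a; b; c; d]| <= 4.
Proof.
apply: leq_trans (card_size [:: a; b; c; d]).
apply: subset_leq_card; apply/subsetP=> x; rewrite !inE.
by rewrite -!orbA.
Qed.

Lemma Erel_rdeg p1 p2 p3 p4 : rdeg (Erel p1 p2 p3 p4).
Proof.
move=> x; apply: leq_trans (card4 (p1 x) (p2 x) (p3 x) (p4 x)).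
apply: subset_leq_card; apply/subsetP=> y; rewrite !inE /Erel.
by rewrite -!orbA.
Qed.

Lemma Erel_cdeg p1 p2 p3 p4 : cdeg (Erel p1 p2 p3 p4).
Proof.
move=> y; apply: leq_trans (card4 ((p1^-1)%g y) ((p2^-1)%g y) ((p3^-1)%g y) ((p4^-1)%g y)).
apply: subset_leq_card; apply/subsetP=> x; rewrite !inE /Erel -!orbA.
by case/or4P=> /eqP ->; rewrite permK eqxx ?orbT.
Qed.

Lemma bad_rect p1 p2 p3 p4 s : bad p1 p2 p3 p4 s ->
  exists S U, cover (Erel p1 p2 p3 p4) s S U /\ #|S| + #|U| = 9.
Proof.
move=> hb.
pose r : rel 'I_8 := fun x y => ~~ Erel p1 p2 p3 p4 x y && (y != s x).
case: (boolP [forall S : {set 'I_8}, #|S| <= #|nbh r S|]) => [/forallP hall|].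
  have [f [finj fr]] := @hall_gen _ 8 r [set: 'I_8] ltac:(by rewrite cardsT card_ord) ltac:(by move=> S _; apply: hall).
  have injf : injective f by move=> x y; apply: finj; rewrite inE.
  move: hb; rewrite /bad => /negP; case; apply/existsP; exists (perm injf).
  have h : forall i, r i (perm injf i) by move=> i; rewrite permE; apply: fr; rewrite inE.
  rewrite /derangement_of; apply/and5P; split; apply/forallP=> i;
    case/andP: (h i) => hn hs; rewrite ?hs //; apply/negP=> /eqP e; move: hn;
    by rewrite /Erel e eqxx ?orbT.
rewrite negb_forall => /existsP[S]; rewrite -ltnNge => hlt.
set U := ~: nbh r S.
have cU : #|U| + #|nbh r S| = 8 by rewrite addnC cardC8.
have hc : cover (Erel p1 p2 p3 p4) s S U.
  move=> x y hx; rewrite inE => hy.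
  apply/negPn/negP => hn.
  move/negP: hy; apply; rewrite inE; apply/existsP; exists x; rewrite hx /r /=.
  by move: hn; rewrite negb_or => /andP[-> hne]; rewrite eq_sym.
have [S' [sS cS']] := @sub_size _ (#|S| + #|U| - 9) S (9 - #|U|) ltac:(by move: cU hlt; glia).
exists S', U; split.
  by move=> x y hx hy; apply: hc => //; apply: (subsetP sS).
by move: cS' cU hlt; glia.
Qed.

Lemma bad_of (p1 p2 p3 p4 s : 'S_8) : s \in bad_set p1 p2 p3 p4 -> bad p1 p2 p3 p4 s.
Proof. by rewrite inE. Qed.

Theorem mainTheorem15 (p1 p2 p3 p4 : 'S_8) :
  #|bad_set p1 p2 p3 p4| <= 96 /\
  (24 < #|bad_set p1 p2 p3 p4| ->
   exists (s0 : 'S_8) (I : {set 'I_8}),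
     #|I| = 5 /\
     forall tau, tau \in bad_set p1 p2 p3 p4 ->
       4 <= #|[set i in I | tau i == s0 i]|).
Proof.
pose E := Erel p1 p2 p3 p4.
have hr : rdeg E := Erel_rdeg p1 p2 p3 p4.
have hcd : cdeg E := Erel_cdeg p1 p2 p3 p4.
have key : (exists (J : {set 'I_8}) (s1 : 'S_8), #|J| = 4 /\ forall s, s \in bad_set p1 p2 p3 p4 -> forall x, x \in J -> s x = s1 x)
    \/ exists I s0 z c, Str E I s0 z c.
  case: (classic (exists I s0 z c, Str E I s0 z c)) => [h|hn]; first by right.
  left.
  case: (set_0Vmem (bad_set p1 p2 p3 p4)) => [B0|[s1 hs1]].
    have [J [_ cJ]] := @sub_size _ 4 [set: 'I_8] 4 ltac:(by rewrite cardsT card_ord).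
    by exists J, 1%g; split=> // s; rewrite B0 inE.
  have [S1 [U1 [hc1 h91]]] := bad_rect (bad_of hs1).
  case: (tight_sizes hr hcd hc1 h91) => [[hS1 hU1]|[hS1 hU1]].
    exists S1, s1; split=> // s hs x hx.
    have [S [U [hc h9]]] := bad_rect (bad_of hs).
    case: (pair_lemma hr hcd hc1 hS1 hU1 hc h9) => [h|h]; [exact: h hx | by case: hn].
  exists ((s1^-1)%g @: U1), s1; split; first by rewrite card_im8.
  move=> s hs x /imsetP[y hy ->].
  have [S [U [hc h9]]] := bad_rect (bad_of hs).
  have h9' : #|U| + #|S| = 9 by rewrite addnC.
  case: (pair_lemma (rdeg_tr hcd) (cdeg_tr hr) (cover_tr hc1) hU1 hS1 (cover_tr hc) h9') => [h|[I [s0 [z [c hst]]]]].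
    by rewrite permKV -(h y hy) permKV.
  by case: hn; exists (s0 @: I), (s0^-1)%g, c, z; exact: (str_tr hst).
case: key => [[J [s1 [hJ hall]]]|[I [s0 [z [c hst]]]]].
  have sub : bad_set p1 p2 p3 p4 \subset agree s1 J.
    apply/subsetP=> s hs; rewrite inE; apply/forallP=> x; apply/implyP=> hx.
    by rewrite (hall s hs x hx).
  have cJ : #|agree s1 J| = 24.
    rewrite card_agree; have := cardC8 J; rewrite hJ => h.
    by have -> : #|~: J| = 4 by lia.
  have := subset_leq_card sub; rewrite cJ => h.
  by split; [apply: leq_trans h _ | move=> h'; move: h h'; glia].
have hI : #|I| = 5 by case: hst.
have ab : forall tau, tau \in bad_set p1 p2 p3 p4 -> 4 <= #|[set i in I | tau i == s0 i]|.
  move=> tau ht; have [S [U [hc h9]]] := bad_rect (bad_of ht).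
  exact: absorb hr hcd hst hc h9.
have sub : bad_set p1 p2 p3 p4 \subset [set s : 'S_8 | 4 <= #|[set i in I | s i == s0 i]|].
  by apply/subsetP=> s hs; rewrite inE; apply: ab.
split; first by apply: leq_trans (subset_leq_card sub) (card_agree4 s0 hI).
by move=> _; exists s0, I.
Qed.
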